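(* Let $k=2m+1$, $l=2n+1$ be odd integers. Let $V(k,l)\subset\mathbb C^3(x,y,z)$ be the vanishing set of $S_n(t)S_{m-1}(z)-S_{n-1}(t)S_m(z)$ with $t=\left( xS_m(z)-yS_{m-1}(z) \right)\left( yS_m(z)-xS_{m-1}(z) \right)-z\left(S^2_m(z)+S^2_{m-1}(z)\right)+4S_m(z)S_{m-1}(z)$, and let $U(k,l)\subset\mathbb C^3(u,v,z)$ be the vanishing set of $S_n(t)S_{m-1}(z)-S_{n-1}(t)S_m(z)$ with $t=uv-z\big(S_m^2(z)+S_{m-1}^2(z)\big)+4S_m(z)S_{m-1}(z)$. Then $V(k,l)$ is birational to $U(k,l)$.
   Context: The Chebyshev polynomials $S_j(\omega)$ are defined for all integers $j$ by $S_0=1$, $S_1=\omega$, $S_{j+1}=\omega S_j-S_{j-1}$. (The correspondence is given by the substitution $u=xS_m(z)-yS_{m-1}(z)$, $v=yS_m(z)-xS_{m-1}(z)$.) *)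

(* Defs.v *)
From HB Require Import structures.
From mathcomp Require Import all_boot all_order all_algebra.
From mathcomp Require Import mpoly.
From mathcomp Require Import complex.
From mathcomp Require Import reals.

Set Implicit Arguments.
Unset Strict Implicit.
Unset Printing Implicit Defensive.

Import Order.TTheory GRing.Theory Num.Theory.
Local Open Scope ring_scope.

(* chebpair w n = (S_n(w), S_{n+1}(w)) *)
Fixpoint chebpair (A : pzRingType) (w : A) (n : nat) : A * A :=
  match n with
  | 0%N => (1, w)
  | n'.+1 => let (a, b) := chebpair w n' in (b, w * b - a)
  end.

Definition chebn (A : pzRingType) (n : nat) (w : A) : A := (chebpair w n).1.

(* S_{-1} = 0 and S_{-(n+2)} = - S_n, which is the unique extension to all
   integers of S_0 = 1, S_1 = w, S_{j+1} = w S_j - S_{j-1}. *)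
Definition cheb (A : pzRingType) (j : int) (w : A) : A :=
  match j with
  | Posz n => chebn n w
  | Negz 0 => 0
  | Negz n.+1 => - chebn n w
  end.

Definition pt (C : Type) := 'I_3 -> C.
Definition c0 : 'I_3 := @Ordinal 3 0 isT.
Definition c1 : 'I_3 := @Ordinal 3 1 isT.
Definition c2 : 'I_3 := @Ordinal 3 2 isT.

Definition Vset (C : fieldType) (m n : int) : pt C -> Prop :=
  fun p =>
    let x := p c0 in let y := p c1 in let z := p c2 in
    let Sm := cheb m z in let Sm1 := cheb (m - 1) z in
    let t := (x * Sm - y * Sm1) * (y * Sm - x * Sm1)
             - z * (Sm ^+ 2 + Sm1 ^+ 2) + 4%:R * Sm * Sm1 in
    cheb n t * Sm1 - cheb (n - 1) t * Sm = 0.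

Definition Uset (C : fieldType) (m n : int) : pt C -> Prop :=
  fun p =>
    let u := p c0 in let v := p c1 in let z := p c2 in
    let Sm := cheb m z in let Sm1 := cheb (m - 1) z in
    let t := u * v - z * (Sm ^+ 2 + Sm1 ^+ 2) + 4%:R * Sm * Sm1 in
    cheb n t * Sm1 - cheb (n - 1) t * Sm = 0.

Definition zariski_closed (C : fieldType) (Z : pt C -> Prop) : Prop :=
  exists P : {mpoly C[3]} -> Prop,
    forall x : pt C, Z x <-> (forall q, P q -> q.@[x] = 0).

Definition open_in (C : fieldType) (A0 X : pt C -> Prop) : Prop :=
  exists Z, zariski_closed Z /\ forall x, A0 x <-> (X x /\ ~ Z x).

Definition dense_in (C : fieldType) (A0 X : pt C -> Prop) : Prop :=
  (forall x, A0 x -> X x) /\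
  forall Z, zariski_closed Z -> (forall x, A0 x -> Z x) -> forall x, X x -> Z x.

Definition regular_on (C : fieldType) (W : pt C -> Prop) (f : pt C -> pt C) :=
  forall w, W w ->
    exists (p : 'I_3 -> {mpoly C[3]}) (q : {mpoly C[3]}),
      q.@[w] != 0 /\
      forall w', W w' -> q.@[w'] != 0 ->
        forall i, f w' i = (p i).@[w'] / q.@[w'].

Definition birational (C : fieldType) (X Y : pt C -> Prop) : Prop :=
  exists (X0 Y0 : pt C -> Prop) (f g : pt C -> pt C),
    open_in X0 X /\ dense_in X0 X /\ open_in Y0 Y /\ dense_in Y0 Y /\
    regular_on X0 f /\ regular_on Y0 g /\
    (forall x, X0 x -> Y0 (f x)) /\
    (forall y, Y0 y -> X0 (g y)) /\
    (forall x, X0 x -> g (f x) = x) /\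
    (forall y, Y0 y -> f (g y) = y).

(* Main.v *)
Require Import Defs.
From HB Require Import structures.
From mathcomp Require Import all_boot all_order all_algebra.
From mathcomp Require Import mpoly.
From mathcomp Require Import complex.
From mathcomp Require Import reals.
From mathcomp Require Import ring lra zify.
From Stdlib Require Import FunctionalExtensionality.
Import Order.TTheory GRing.Theory Num.Theory.
Local Open Scope ring_scope.

Lemma chebpair2 (A : pzRingType) (w : A) n : (chebpair w n).2 = chebn n.+1 w.
Proof. by rewrite /chebn /=; case: (chebpair w n). Qed.

Lemma chebn0 (A : pzRingType) (w : A) : chebn 0 w = 1.
Proof. by []. Qed.
Lemma chebn1 (A : pzRingType) (w : A) : chebn 1 w = w.
Proof. by []. Qed.

Lemma chebnSS (A : pzRingType) (w : A) n :
  chebn n.+2 w = w * chebn n.+1 w - chebn n w.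
Proof.
rewrite {1}/chebn /= -chebpair2.
have -> : chebn n w = (chebpair w n).1 by [].
by case: (chebpair w n).
Qed.

Lemma chebn_morph (A B : comNzRingType) (f : {rmorphism A -> B}) (w : A) n :
  f (chebn n w) = chebn n (f w).
Proof.
suff : f (chebn n w) = chebn n (f w) /\ f (chebn n.+1 w) = chebn n.+1 (f w) by case.
elim: n => [|n [IH1 IH2]]; first by rewrite !chebn0 !chebn1 rmorph1.
by split=> //; rewrite !chebnSS rmorphB rmorphM IH1 IH2.
Qed.

Lemma cheb_morph (A B : comNzRingType) (f : {rmorphism A -> B}) (w : A) j :
  f (cheb j w) = cheb j (f w).
Proof.
case: j => [n|[|n]] /=; first exact: chebn_morph.
  by rewrite rmorph0.
by rewrite rmorphN chebn_morph.
Qed.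

Lemma chebn_nz (A : nzRingType) (w : A) n : chebn n w = 0 -> chebn n.+1 w = 0 -> False.
Proof.
elim: n => [|n IH]; first by rewrite chebn0 => /eqP; rewrite oner_eq0.
move=> h1; rewrite chebnSS h1 mulr0 sub0r => /eqP; rewrite oppr_eq0 => /eqP h0.
exact: IH h0 h1.
Qed.

Lemma cheb_nz (A : nzRingType) (w : A) (m : int) :
  cheb m w = 0 -> cheb (m - 1) w = 0 -> False.
Proof.
case: m => [[|n]|[|n]].
- by rewrite /= chebn0 => /eqP; rewrite oner_eq0.
- have -> : (Posz n.+1 - 1 = Posz n)%R by rewrite -addn1 PoszD addrK.
  by move=> h1 h0; exact: chebn_nz h0 h1.
- have -> : (Negz 0 - 1 = Negz 1)%R by [].
  by rewrite /= chebn0 => _ /eqP; rewrite oppr_eq0 oner_eq0.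
- have -> : (Negz n.+1 - 1 = Negz n.+2)%R by rewrite !NegzE; ring.
  rewrite /= => /eqP; rewrite oppr_eq0 => /eqP h0 /eqP; rewrite oppr_eq0 => /eqP h1.
  exact: chebn_nz h0 h1.
Qed.

Lemma cheb2 (A : nzRingType) (j : int) : cheb j (2%:R : A) = (j + 1)%:~R.
Proof.
have hn : forall n, chebn n (2%:R : A) = n.+1%:R.
  move=> n; suff : chebn n (2%:R : A) = n.+1%:R /\ chebn n.+1 (2%:R : A) = n.+2%:R by case.
  elim: n => [|n [IH1 IH2]]; first by rewrite chebn0 chebn1.
  split=> //; rewrite chebnSS IH1 IH2 -natrM -natrB; last by lia.
  by congr (_%:R); lia.
case: j => [n|[|n]] /=; first by rewrite hn -PoszD addn1.
  by [].
rewrite hn NegzE. have -> : (- (n.+2)%:Z + 1 = - (n.+1)%:Z)%R by rewrite -addn1 PoszD opprD addrK. by rewrite mulrNz.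
Qed.


Section Anal.
Variable C : numClosedFieldType.

Definition Lip (p : pt C) (f : pt C -> C) := exists K : C, 0 <= K /\
  forall (r : C) (w : pt C), 0 <= r -> r <= 1 -> (forall i, `|w i - p i| <= r) ->
    `|f w - f p| <= K * r.

Lemma Lip_ext p g f : (forall w, f w = g w) -> Lip p f -> Lip p g.
Proof. by move=> e [K [K0 h]]; exists K; split=> // r w *; rewrite -!e; apply: h. Qed.

Lemma Lip_const p c : Lip p (fun _ => c).
Proof. by exists 0; split=> // r w _ _ _; rewrite subrr normr0 mul0r. Qed.

Lemma Lip_coord p i : Lip p (fun w => w i).
Proof. by exists 1; split=> // r w _ _ h; rewrite mul1r. Qed.

Lemma Lip_add p f g : Lip p f -> Lip p g -> Lip p (fun w => f w + g w).
Proof.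
move=> [K1 [K1p h1]] [K2 [K2p h2]]; exists (K1 + K2); split; first exact: addr_ge0.
move=> r w r0 r1 hw.
have -> : f w + g w - (f p + g p) = (f w - f p) + (g w - g p) by ring.
apply: le_trans (ler_normD _ _) _; rewrite mulrDl; apply: lerD; auto.
Qed.

Lemma Lip_mul p f g : Lip p f -> Lip p g -> Lip p (fun w => f w * g w).
Proof.
move=> [K1 [K1p h1]] [K2 [K2p h2]].
exists ((`|f p| + K1) * K2 + K1 * `|g p|); split.
  by apply: addr_ge0; apply: mulr_ge0 => //; apply: addr_ge0.
move=> r w r0 r1 hw.
have -> : f w * g w - f p * g p = f w * (g w - g p) + (f w - f p) * g p by ring.
apply: le_trans (ler_normD _ _) _; rewrite [X in _ <= X]mulrDl; apply: lerD; rewrite normrM.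
- have hf : `|f w| <= `|f p| + K1.
    have -> : f w = f p + (f w - f p) by ring.
    apply: le_trans (ler_normD _ _) _; apply: lerD => //.
    apply: le_trans (h1 r w r0 r1 hw) _; rewrite -{2}[K1]mulr1; exact: ler_wpM2l.
  rewrite -mulrA; apply: ler_pM => //; exact: h2.
- rewrite mulrAC; apply: ler_pM => //; exact: h1.
Qed.

Lemma Lip_sum p (I : Type) (s : seq I) (F : I -> pt C -> C) :
  (forall i, Lip p (F i)) -> Lip p (fun w => \sum_(i <- s) F i w).
Proof.
move=> hF; elim: s => [|a s IH].
  by apply: (@Lip_ext p _ (fun _ => 0)) => [w|]; rewrite ?big_nil //; exact: Lip_const.
by apply: (@Lip_ext p _ (fun w => F a w + \sum_(i <- s) F i w)) => [w|]; rewrite ?big_cons //; exact: Lip_add.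
Qed.

Lemma Lip_prod p (I : Type) (s : seq I) (F : I -> pt C -> C) :
  (forall i, Lip p (F i)) -> Lip p (fun w => \prod_(i <- s) F i w).
Proof.
move=> hF; elim: s => [|a s IH].
  by apply: (@Lip_ext p _ (fun _ => 1)) => [w|]; rewrite ?big_nil //; exact: Lip_const.
by apply: (@Lip_ext p _ (fun w => F a w * \prod_(i <- s) F i w)) => [w|]; rewrite ?big_cons //; exact: Lip_mul.
Qed.

Lemma Lip_exp p f k : Lip p f -> Lip p (fun w => f w ^+ k).
Proof.
move=> hf; elim: k => [|k IH].
  by apply: (@Lip_ext p _ (fun _ => 1)) => [w|]; rewrite ?expr0 //; exact: Lip_const.
by apply: (@Lip_ext p _ (fun w => f w * f w ^+ k)) => [w|]; rewrite ?exprS //; exact: Lip_mul.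
Qed.

Lemma Lip_mpoly p (q : {mpoly C[3]}) : Lip p (fun w => q.@[w]).
Proof.
apply: (@Lip_ext p _ (fun w => \sum_(m <- msupp q) q@_m * \prod_i w i ^+ m i)) => [w|]; first by rewrite -mevalE.
apply: Lip_sum => m; apply: Lip_mul; first exact: Lip_const.
apply: Lip_prod => i; apply: Lip_exp; exact: Lip_coord.
Qed.

Lemma Lip_cont p f : Lip p f -> forall e : C, 0 < e -> exists r : C, 0 < r /\
  forall w, (forall i, `|w i - p i| < r) -> `|f w - f p| < e.
Proof.
move=> [K [K0 h]] e e0.
have K1 : 0 < K + 1 + e by rewrite -addrA; apply: ltr_wpDl => //; apply: addr_gt0.
exists (e / (K + 1 + e)); split; first by rewrite divr_gt0.
move=> w hw.
have r0 : 0 <= e / (K + 1 + e) by rewrite divr_ge0 // ltW.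
have r1 : e / (K + 1 + e) <= 1.
  rewrite ler_pdivrMr // mul1r; apply: ler_wpDl => //; exact: addr_ge0.
apply: le_lt_trans (h _ w r0 r1 (fun i => ltW (hw i))) _.
rewrite mulrA ltr_pdivrMr // mulrC ltr_pM2l //.
by rewrite -addrA ltrDl; apply: addr_gt0.
Qed.

Lemma mpoly_cont p (q : {mpoly C[3]}) e : 0 < e -> exists r : C, 0 < r /\
  forall w, (forall i, `|w i - p i| < r) -> `|q.@[w] - q.@[p]| < e.
Proof. by move=> e0; case: (@Lip_cont p _ (Lip_mpoly p q) e e0) => r [r0 hr]; exists r; split => // w hw; exact: hr. Qed.

End Anal.


Section Roots.
Variable C : numClosedFieldType.

Lemma prod_near (x0 : C) (rs : seq C) : rs != [::] ->
  exists2 r, r \in rs & `|x0 - r| ^+ size rs <= `|(\prod_(z <- rs) ('X - z%:P)).[x0]|.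
Proof.
elim: rs => [//|a rs IH] _.
rewrite big_cons hornerM hornerXsubC normrM /=.
case: rs IH => [|b rs] IH.
  by exists a; rewrite ?mem_seq1 // big_nil hornerC normr1 mulr1 expr1.
case: IH => // r rin hr.
have [h|h] := orP (ger_leVge (normr_ge0 (x0 - a)) (normr_ge0 (x0 - r))).
- exists a; first by rewrite mem_head.
  rewrite exprS; apply: ler_pM => //; first by apply: exprn_ge0.
  apply: le_trans hr; apply: lerXn2r => //; rewrite ?nnegrE //.
- exists r; first by rewrite in_cons rin orbT.
  rewrite exprS; apply: ler_pM => //; exact: exprn_ge0.
Qed.

Lemma root_near (P : {poly C}) (N : nat) (x0 : C) : size P = N.+2 ->
  exists r, root P r /\ `|x0 - r| ^+ N.+1 <= `|P.[x0]| / `|lead_coef P|.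
Proof.
move=> hs.
have P0 : P != 0 by rewrite -size_poly_eq0 hs.
have l0 : lead_coef P != 0 by rewrite lead_coef_eq0.
case: (closed_field_poly_normal P) => rs hP.
have hsz : size rs = N.+1.
  by move: hs; rewrite hP size_scale // size_prod_XsubC => -[].
have rs0 : rs != [::] by rewrite -size_eq0 hsz.
case: (@prod_near x0 rs rs0) => r rin hr.
exists r; split.
  by rewrite hP rootZ // root_prod_XsubC.
have -> : P.[x0] = lead_coef P * (\prod_(z <- rs) ('X - z%:P)).[x0] by rewrite {1}hP hornerZ.
by rewrite normrM mulrC mulKf ?normr_eq0 // -hsz.
Qed.

Lemma nonroot_near (D : {poly C}) (z0 d : C) : D != 0 -> 0 < d ->
  exists z, `|z - z0| < d /\ D.[z] != 0.
Proof.
move=> D0 d0.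
pose rs := [seq z0 + d / (k.+2)%:R | k <- iota 0 (size D)].
have : ~~ all (root D) rs.
  apply/negP => hall.
  have : uniq rs.
    rewrite map_inj_uniq ?iota_uniq // => i j /addrI /mulfI.
    move=> /(_ (lt0r_neq0 d0)) /invr_inj /eqP; rewrite eqr_nat => /eqP [] //.
  move=> /(max_poly_roots D0 hall); by rewrite size_map size_iota ltnn.
case/allPn => z /mapP [k _ ->] hk; exists (z0 + d / (k.+2)%:R); split=> //.
rewrite addrAC subrr add0r normrM ger0_norm ?ltW // normfV ger0_norm ?ler0n //.
rewrite ltr_pdivrMr ?ltr0n // ltr_pMr // ltr1n //.
Qed.

End Roots.


Section Approx.
Variable C : numClosedFieldType.

Lemma pos_min (a b : C) : 0 < a -> 0 < b -> exists c, [/\ 0 < c, c <= a & c <= b].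
Proof.
move=> a0 b0; have ab : 0 < a + b by apply: addr_gt0.
exists (a * b / (a + b)); split.
- by rewrite divr_gt0 // mulr_gt0.
- by rewrite -mulrA ger_pMr // ler_pdivrMr // mul1r ?lerDl ?lerDr ltW.
- by rewrite mulrAC ger_pMl // ler_pdivrMr // mul1r ?lerDl ?lerDr ltW.
Qed.

Definition cont_at (F : C -> C) (z0 : C) := forall e, 0 < e -> exists r, 0 < r /\
  forall z, `|z - z0| < r -> `|F z - F z0| < e.

Lemma approx1 (Pz : C -> {poly C}) (E L : C -> C) (Dp : {poly C}) (z0 : C) (N : nat) :
  Dp != 0 ->
  (forall z, (Pz z).[0] = E z) ->
  E z0 = 0 -> L z0 != 0 -> cont_at E z0 -> cont_at L z0 ->
  (forall z, L z != 0 -> size (Pz z) = N.+2 /\ lead_coef (Pz z) = L z) ->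
  forall d, 0 < d -> exists z s, [/\ `|z - z0| < d, `|s| < d, (Pz z).[s] = 0 & Dp.[z] != 0].
Proof.
move=> D0 hE E0 L0 cE cL hPz d d0.
set l := `|L z0|.
have l0 : 0 < l by rewrite normr_gt0.
have l2 : 0 < l / 2%:R by rewrite divr_gt0.
have dN : 0 < d ^+ N.+1 by apply: exprn_gt0.
case: (cL _ l2) => r1 [r10 h1].
case: (cE (l / 2%:R * d ^+ N.+1)) => [|r2 [r20 h2]]; first by rewrite mulr_gt0.
case: (@pos_min r1 r2 r10 r20) => c [c0 c1 c2].
case: (@pos_min c d c0 d0) => rho [rho0 rc rd].
case: (@nonroot_near _ Dp z0 rho D0 rho0) => z [hz Dz].
have hz1 : `|z - z0| < r1 by apply: lt_le_trans hz (le_trans rc c1).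
have hz2 : `|z - z0| < r2 by apply: lt_le_trans hz (le_trans rc c2).
have hLz : l / 2%:R < `|L z|.
  have hh : `|L z0 - L z| < l / 2%:R by rewrite distrC; exact: h1.
  have hl : l <= `|L z| + `|L z0 - L z|.
    by have := ler_normD (L z) (L z0 - L z); rewrite addrC subrK.
  have : l < `|L z| + l / 2%:R by apply: le_lt_trans hl _; rewrite ltrD2l.
  by rewrite {1}(splitr l) ltrD2r.
have Lz0 : L z != 0 by rewrite -normr_gt0; apply: lt_trans hLz.
case: (hPz z Lz0) => hs hl.
case: (@root_near _ (Pz z) N 0 hs) => s [hroot hsb].
exists z, s; split=> //.
- exact: lt_le_trans hz rd.
- rewrite -(@ltr_pXn2r _ N.+1) // ?nnegrE ?normr_ge0 ?ltW //.
  apply: le_lt_trans; first by rewrite -normrN -[- s]add0r; exact: hsb.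
  rewrite hE hl ltr_pdivrMr ?(lt_trans l2) //.
  have := h2 z hz2; rewrite E0 subr0 => hEz.
  apply: lt_le_trans hEz _; rewrite mulrC; apply: ler_wpM2l; first by apply: ltW.
  exact: ltW.
- exact/eqP.
Qed.

End Approx.


Section PolySize.
Variable C : idomainType.

Lemma chebn_size (T : {poly C}) (k : nat) : size T = 3 ->
  size (chebn k T) = (2 * k).+1 /\ lead_coef (chebn k T) = lead_coef T ^+ k.
Proof.
move=> hT.
have T0 : T != 0 by rewrite -size_poly_eq0 hT.
suff : (size (chebn k T) = (2 * k).+1 /\ lead_coef (chebn k T) = lead_coef T ^+ k) /\
       (size (chebn k.+1 T) = (2 * k.+1).+1 /\ lead_coef (chebn k.+1 T) = lead_coef T ^+ k.+1) by case.
elim: k => [|k [[s1 l1] [s2 l2]]].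
  by rewrite chebn0 chebn1 size_poly1 lead_coef1 hT expr1.
split=> //.
have S0 : chebn k.+1 T != 0 by rewrite -size_poly_eq0 s2.
have hm : size (T * chebn k.+1 T) = (2 * k.+2).+1.
  by rewrite size_mul // hT s2; lia.
rewrite chebnSS; split.
- by rewrite size_polyDl ?size_polyN hm //; rewrite s1; lia.
- rewrite lead_coefDl ?size_polyN ?hm ?s1; last by lia.
  by rewrite lead_coefM l2 -exprS.
Qed.

Lemma Gcore (T : {poly C}) (a b : C) (j : nat) : size T = 3 -> a != 0 ->
  size (chebn j.+1 T * a%:P - chebn j T * b%:P) = (2 * j + 1).+2 /\
  lead_coef (chebn j.+1 T * a%:P - chebn j T * b%:P) = a * lead_coef T ^+ j.+1.
Proof.
move=> hT a0.
case: (@chebn_size T j hT) => s1 l1; case: (@chebn_size T j.+1 hT) => s2 l2.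
have h1 : size (chebn j.+1 T * a%:P) = (2 * j + 1).+2.
  by rewrite mulrC mul_polyC size_scale // s2; lia.
have h2 : (size (- (chebn j T * b%:P)) < (2 * j + 1).+2)%N.
  rewrite size_polyN mulrC mul_polyC; apply: leq_ltn_trans (size_scale_leq _ _) _.
  by rewrite s1; lia.
split; first by rewrite size_polyDl // h1.
by rewrite lead_coefDl ?h1 // mulrC mul_polyC lead_coefZ l2.
Qed.

Lemma lin_prod (P1 P2 : {poly C}) (K : C) : size P1 = 2 -> size P2 = 2 ->
  size (P1 * P2 + K%:P) = 3 /\ lead_coef (P1 * P2 + K%:P) = lead_coef P1 * lead_coef P2.
Proof.
move=> h1 h2.
have P10 : P1 != 0 by rewrite -size_poly_eq0 h1.
have P20 : P2 != 0 by rewrite -size_poly_eq0 h2.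
have hm : size (P1 * P2) = 3 by rewrite size_mul // h1 h2.
have hK : (size K%:P < 3)%N by apply: leq_ltn_trans (size_polyC_leq1 _) _.
by rewrite size_polyDl ?hm // lead_coefDl ?hm // lead_coefM.
Qed.

Lemma lin_size (c d : C) : c != 0 -> size ('X * c%:P + d%:P) = 2 /\ lead_coef ('X * c%:P + d%:P) = c.
Proof.
move=> c0; rewrite mulrC size_MXaddC polyC_eq0 (negPf c0) /= size_polyC c0.
split=> //; rewrite lead_coefDl ?lead_coefMX ?lead_coefC //.
have -> : size (c%:P * 'X) = 2 by rewrite size_mulX ?polyC_eq0 // size_polyC c0.
exact: leq_ltn_trans (size_polyC_leq1 _) _.
Qed.

End PolySize.


Definition mk3 {T : Type} (a b c : T) : 'I_3 -> T :=
  fun i => if val i == 0%N then a else if val i == 1%N then b else c.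

Lemma ord3_cases (P : 'I_3 -> Prop) : P c0 -> P c1 -> P c2 -> forall i, P i.
Proof.
move=> h0 h1 h2 [[|[|[|k]]] hk].
- by have -> : Ordinal hk = c0 by apply: val_inj.
- by have -> : Ordinal hk = c1 by apply: val_inj.
- by have -> : Ordinal hk = c2 by apply: val_inj.
- by [].
Qed.

Lemma pt_ext {T : Type} (p q : 'I_3 -> T) : p c0 = q c0 -> p c1 = q c1 -> p c2 = q c2 -> p = q.
Proof. by move=> *; apply: functional_extensionality; apply: ord3_cases. Qed.

Section Main.
Variables (m n : int).

Definition Tu {A : comNzRingType} (u v z : A) : A :=
  u * v - z * (cheb m z ^+ 2 + cheb (m - 1) z ^+ 2) + 4%:R * cheb m z * cheb (m - 1) z.
Definition Tf {A : comNzRingType} (x y z : A) : A :=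
  Tu (x * cheb m z - y * cheb (m - 1) z) (y * cheb m z - x * cheb (m - 1) z) z.
Definition Gf {A : comNzRingType} (t a b : A) : A := cheb n t * a - cheb (n - 1) t * b.
Definition Vf {A : comNzRingType} (x y z : A) : A := Gf (Tf x y z) (cheb (m - 1) z) (cheb m z).
Definition Uf {A : comNzRingType} (x y z : A) : A := Gf (Tu x y z) (cheb (m - 1) z) (cheb m z).
Definition Dz {A : comNzRingType} (z : A) : A := cheb m z ^+ 2 - cheb (m - 1) z ^+ 2.

Section Morph.
Variables (A B : comNzRingType) (f : {rmorphism A -> B}).
Lemma Tu_morph u v z : f (Tu u v z) = Tu (f u) (f v) (f z).
Proof. by rewrite /Tu !(rmorph_nat, rmorphN, rmorphD, rmorphB, rmorphM, rmorphXn, cheb_morph). Qed.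
Lemma Tf_morph u v z : f (Tf u v z) = Tf (f u) (f v) (f z).
Proof. by rewrite /Tf Tu_morph !(rmorphB, rmorphM, cheb_morph). Qed.
Lemma Gf_morph t a b : f (Gf t a b) = Gf (f t) (f a) (f b).
Proof. by rewrite /Gf !(rmorphB, rmorphM, cheb_morph). Qed.
Lemma Vf_morph x y z : f (Vf x y z) = Vf (f x) (f y) (f z).
Proof. by rewrite /Vf Gf_morph Tf_morph !cheb_morph. Qed.
Lemma Uf_morph x y z : f (Uf x y z) = Uf (f x) (f y) (f z).
Proof. by rewrite /Uf Gf_morph Tu_morph !cheb_morph. Qed.
Lemma Dz_morph z : f (Dz z) = Dz (f z).
Proof. by rewrite /Dz !(rmorphB, rmorphXn, cheb_morph). Qed.
End Morph.

Lemma Gf0 (A : comNzRingType) (t a b : A) : n = 0 -> Gf t a b = a.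
Proof. by move=> hn; rewrite /Gf hn /= chebn0 mul1r mul0r subr0. Qed.
Lemma Gfm1 (A : comNzRingType) (t a b : A) : n = Negz 0 -> Gf t a b = b.
Proof.
move=> hn; rewrite /Gf hn.
have -> : (Negz 0 - 1 = Negz 1)%R by [].
by rewrite /= chebn0 mul0r mulN1r opprK add0r.
Qed.

Lemma Dz2 (C : numFieldType) : Dz (2%:R : C) != 0.
Proof.
rewrite /Dz !cheb2 -!rmorphXn -rmorphB /= intr_eq0.
apply/negP => /eqP h.
have : ((m + 1) ^+ 2 - (m - 1 + 1) ^+ 2 = 2 * m + 1 :> int)%R by ring.
by rewrite h; lia.
Qed.

Section Field.
Variable C : numClosedFieldType.

Lemma ab_nz (z : C) : Dz z = 0 -> cheb (m - 1) z != 0 /\ cheb m z != 0.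
Proof.
rewrite /Dz => /eqP; rewrite subr_eq0 => /eqP h.
have [a0|a0] := eqVneq (cheb (m - 1) z) 0.
  move: h; rewrite a0 expr0n /= => /eqP; rewrite expf_eq0 /= => /eqP b0.
  by case: (cheb_nz _ _ _ b0 a0).
split=> //; apply/eqP => b0; move: h; rewrite b0 expr0n /= => /esym/eqP.
by rewrite expf_eq0 /= (negPf a0).
Qed.

Lemma Gf_size (T : {poly C}) (a b : C) (j : nat) : size T = 3 ->
  (n = Posz j.+1 \/ n = Negz j.+1) -> (if n is Posz _ then a else b) != 0 ->
  size (Gf T a%:P b%:P) = (2 * j + 1).+2 /\
  lead_coef (Gf T a%:P b%:P) = (if n is Posz _ then a else b) * lead_coef T ^+ j.+1.
Proof.
move=> hT [hn|hn]; rewrite hn /= => c0; rewrite /Gf hn.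
- have -> : (Posz j.+1 - 1 = Posz j)%R by rewrite -addn1 PoszD addrK.
  exact: Gcore.
- have -> : (Negz j.+1 - 1 = Negz j.+2)%R by rewrite !NegzE; ring.
  have -> : cheb (Negz j.+1) T * a%:P - cheb (Negz j.+2) T * b%:P =
            chebn j.+1 T * b%:P - chebn j T * a%:P by rewrite /=; ring.
  exact: Gcore.
Qed.


Lemma mev_cheb j (w : pt C) : (cheb j ('X_c2 : {mpoly C[3]})).@[w] = cheb j (w c2).
Proof. by rewrite cheb_morph /= mevalXU. Qed.

Lemma cont_mpoly (q : {mpoly C[3]}) (a b : C) (F : C -> C) z0 :
  (forall z, F z = q.@[mk3 a b z]) -> @cont_at C F z0.
Proof.
move=> hF e e0; case: (@mpoly_cont C (mk3 a b z0) q e e0) => r [r0 hr].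
exists r; split=> // z hz; rewrite !hF; apply: hr.
by apply: ord3_cases; rewrite /mk3 /= ?subrr ?normr0.
Qed.

Lemma n_cases : n = 0 \/ n = Negz 0 \/ exists j, n = Posz j.+1 \/ n = Negz j.+1.
Proof.
by case: n => [[|j]|[|j]]; [left|right;right;exists j;left|right;left|right;right;exists j;right].
Qed.

Lemma Dp_nz : Dz ('X : {poly C}) != 0.
Proof.
apply/negP => /eqP h; have := @Dz2 C; rewrite -[2%:R](@hornerX C).
by rewrite -horner_evalE -Dz_morph h rmorph0 eqxx.
Qed.

Lemma approxV (p : pt C) : Vset m n p -> Dz (p c2) = 0 -> forall d, 0 < d ->
  exists w, [/\ Vset m n w, Dz (w c2) != 0 & forall i, `|w i - p i| < d].
Proof.
move=> Vp Dp0 d d0.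
case: (@ab_nz _ Dp0) => a0 b0.
have Vp' : Vf (p c0) (p c1) (p c2) = 0 := Vp.
case: n_cases => [hn|[hn|[j hj]]].
- by move: Vp'; rewrite /Vf Gf0 // => /eqP; rewrite (negPf a0).
- by move: Vp'; rewrite /Vf Gfm1 // => /eqP; rewrite (negPf b0).
set x0 := p c0 in Vp' *; set y0 := p c1 in Vp' *; set z0 := p c2 in Vp' Dp0 a0 b0 *.
pose Pz (z : C) := Vf ('X + x0%:P) y0%:P (z%:P) : {poly C}.
pose E (z : C) := Vf x0 y0 z.
pose cc (z : C) := if n is Posz _ then cheb (m - 1) z else cheb m z.
pose L (z : C) := cc z * (cheb m z * - cheb (m - 1) z) ^+ j.+1.
have hE : forall z, (Pz z).[0] = E z.
  by move=> z; rewrite -horner_evalE Vf_morph /= !horner_evalE hornerD hornerX !hornerC add0r.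
have L0 : L z0 != 0.
  rewrite /L mulf_neq0 ?expf_neq0 ?mulf_neq0 ?oppr_eq0 //.
  by rewrite /cc; case: hj => ->.
have cE : @cont_at C E z0.
  apply: (@cont_mpoly (Vf 'X_c0 'X_c1 'X_c2) x0 y0) => z.
  by rewrite Vf_morph /= !mevalXU.
have cL : @cont_at C L z0.
  apply: (@cont_mpoly ((if n is Posz _ then cheb (m - 1) 'X_c2 else cheb m 'X_c2) *
     (cheb m 'X_c2 * - cheb (m - 1) 'X_c2) ^+ j.+1) x0 y0) => z.
  rewrite rmorphM rmorphXn rmorphM rmorphN /= !mev_cheb /L /cc /mk3 /=.
  by case: hj => hn; rewrite hn /= mev_cheb.
have hPz : forall z, L z != 0 -> size (Pz z) = (2 * j + 1).+2 /\ lead_coef (Pz z) = L z.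
  move=> z; rewrite /L mulf_eq0 negb_or expf_eq0 /= mulf_eq0 oppr_eq0 negb_or.
  case/andP => cz /andP [bz az].
  have eT : Tf ('X + x0%:P) y0%:P z%:P =
    ('X * (cheb m z)%:P + (x0 * cheb m z - y0 * cheb (m - 1) z)%:P) *
    ('X * (- cheb (m - 1) z)%:P + (y0 * cheb m z - x0 * cheb (m - 1) z)%:P) +
    (- (z * (cheb m z ^+ 2 + cheb (m - 1) z ^+ 2)) + 4%:R * cheb m z * cheb (m - 1) z)%:P.
    rewrite /Tf /Tu -!(cheb_morph _ _ polyC).
    rewrite !(rmorph_nat, rmorphN, rmorphD, rmorphB, rmorphM, rmorphXn) /=; ring.
  case: (@lin_size _ (cheb m z) (x0 * cheb m z - y0 * cheb (m - 1) z) bz) => s1 l1.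
  have naz : - cheb (m - 1) z != 0 by rewrite oppr_eq0.
  case: (@lin_size _ (- cheb (m - 1) z) (y0 * cheb m z - x0 * cheb (m - 1) z) naz) => s2 l2.
  case: (@lin_prod _ _ _ (- (z * (cheb m z ^+ 2 + cheb (m - 1) z ^+ 2)) + 4%:R * cheb m z * cheb (m - 1) z) s1 s2) => sT lT.
  rewrite /Pz /Vf -!(cheb_morph _ _ polyC) eT.
  case: (@Gf_size _ _ _ j sT hj cz) => -> ->; split=> //.
  by rewrite lT l1 l2.
have := @approx1 C Pz E L _ z0 (2 * j + 1) Dp_nz hE Vp' L0 cE cL hPz d d0.
case=> z [s [hz hs hroot hD]].
exists (mk3 (s + x0) y0 z); split.
- have : (Pz z).[s] = 0 := hroot.
  by rewrite -horner_evalE Vf_morph /= !horner_evalE hornerD hornerX !hornerC.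
- by move: hD; rewrite -horner_evalE Dz_morph /= horner_evalE hornerX.
- by apply: ord3_cases; rewrite /mk3 /= ?addrK ?subrr ?normr0.
Qed.

Lemma approxU (p : pt C) : Uset m n p -> Dz (p c2) = 0 -> forall d, 0 < d ->
  exists w, [/\ Uset m n w, Dz (w c2) != 0 & forall i, `|w i - p i| < d].
Proof.
move=> Up Dp0 d d0.
case: (@ab_nz _ Dp0) => a0 b0.
have Up' : Uf (p c0) (p c1) (p c2) = 0 := Up.
case: n_cases => [hn|[hn|[j hj]]].
- by move: Up'; rewrite /Uf Gf0 // => /eqP; rewrite (negPf a0).
- by move: Up'; rewrite /Uf Gfm1 // => /eqP; rewrite (negPf b0).
set x0 := p c0 in Up' *; set y0 := p c1 in Up' *; set z0 := p c2 in Up' Dp0 a0 b0 *.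
pose Pz (z : C) := Uf ('X + x0%:P) ('X + y0%:P) (z%:P) : {poly C}.
pose E (z : C) := Uf x0 y0 z.
pose L (z : C) := if n is Posz _ then cheb (m - 1) z else cheb m z.
have hE : forall z, (Pz z).[0] = E z.
  by move=> z; rewrite -horner_evalE Uf_morph /= !horner_evalE !hornerD hornerX !hornerC !add0r.
have L0 : L z0 != 0 by rewrite /L; case: hj => ->.
have cE : @cont_at C E z0.
  apply: (@cont_mpoly (Uf 'X_c0 'X_c1 'X_c2) x0 y0) => z.
  by rewrite Uf_morph /= !mevalXU.
have cL : @cont_at C L z0.
  apply: (@cont_mpoly (if n is Posz _ then cheb (m - 1) 'X_c2 else cheb m 'X_c2) x0 y0) => z.
  by rewrite /L; case: hj => hn; rewrite hn /= mev_cheb.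
have hPz : forall z, L z != 0 -> size (Pz z) = (2 * j + 1).+2 /\ lead_coef (Pz z) = L z.
  move=> z cz.
  have eT : Tu ('X + x0%:P) ('X + y0%:P) z%:P =
    ('X + x0%:P) * ('X + y0%:P) +
    (- (z * (cheb m z ^+ 2 + cheb (m - 1) z ^+ 2)) + 4%:R * cheb m z * cheb (m - 1) z)%:P.
    rewrite /Tu -!(cheb_morph _ _ polyC).
    rewrite !(rmorph_nat, rmorphN, rmorphD, rmorphB, rmorphM, rmorphXn) /=; ring.
  case: (@lin_prod _ _ _ (- (z * (cheb m z ^+ 2 + cheb (m - 1) z ^+ 2)) + 4%:R * cheb m z * cheb (m - 1) z) (size_XaddC x0) (size_XaddC y0)) => sT lT.
  rewrite /Pz /Uf -!(cheb_morph _ _ polyC) eT.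
  case: (@Gf_size _ _ _ j sT hj cz) => -> ->; split=> //.
  by rewrite lT !lead_coefXaddC mulr1 expr1n mulr1.
have := @approx1 C Pz E L _ z0 (2 * j + 1) Dp_nz hE Up' L0 cE cL hPz d d0.
case=> z [s [hz hs hroot hD]].
exists (mk3 (s + x0) (s + y0) z); split.
- have : (Pz z).[s] = 0 := hroot.
  by rewrite -horner_evalE Uf_morph /= !horner_evalE !hornerD hornerX !hornerC.
- by move: hD; rewrite -horner_evalE Dz_morph /= horner_evalE hornerX.
- by apply: ord3_cases; rewrite /mk3 /= ?addrK ?subrr ?normr0.
Qed.

Lemma dense_gen (S : pt C -> Prop) :
  (forall p, S p -> Dz (p c2) = 0 -> forall d, 0 < d ->
     exists w, [/\ S w, Dz (w c2) != 0 & forall i, `|w i - p i| < d]) ->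
  dense_in (fun x => S x /\ Dz (x c2) != 0) S.
Proof.
move=> happ; split; first by move=> x [].
move=> Z [P hP] hA x Sx; apply/hP => q Pq.
have [Dx|Dx] := eqVneq (Dz (x c2)) 0; last first.
  by have /hP := hA x (conj Sx Dx); apply.
have [//|qx] := eqVneq (q.@[x]) 0.
have e0 : 0 < `|q.@[x]| by rewrite normr_gt0.
case: (@mpoly_cont C x q _ e0) => r [r0 hr].
case: (happ x Sx Dx r r0) => w [Sw Dw hw].
have qw : q.@[w] = 0 by have /hP := hA w (conj Sw Dw); apply.
by have := hr w hw; rewrite qw sub0r normrN ltxx.
Qed.

Lemma inv1 (a b s t : C) : s^+2 - t^+2 != 0 -> ((a*s - b*t)*s + (b*s - a*t)*t)/(s^+2 - t^+2) = a.
Proof. move=> H; field; exact: H. Qed.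
Lemma inv2 (a b s t : C) : s^+2 - t^+2 != 0 -> (a * s + b * t)/(s^+2 - t^+2) * s - (b*s + a*t)/(s^+2 - t^+2) * t = a.
Proof. move=> H; field; exact: H. Qed.

Definition fmap (p : pt C) : pt C :=
  mk3 (p c0 * cheb m (p c2) - p c1 * cheb (m - 1) (p c2))
      (p c1 * cheb m (p c2) - p c0 * cheb (m - 1) (p c2)) (p c2).
Definition gmap (p : pt C) : pt C :=
  mk3 ((p c0 * cheb m (p c2) + p c1 * cheb (m - 1) (p c2)) / Dz (p c2))
      ((p c1 * cheb m (p c2) + p c0 * cheb (m - 1) (p c2)) / Dz (p c2)) (p c2).

Definition Smp j : {mpoly C[3]} := cheb j 'X_c2.


Lemma open_lem (S : pt C -> Prop) :
  open_in (fun x => S x /\ Dz (x c2) != 0) S.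
Proof.
pose Dm : {mpoly C[3]} := Dz 'X_c2.
have hD : forall w, Dm.@[w] = Dz (w c2).
  by move=> w; rewrite /Dm Dz_morph /= mevalXU.
exists (fun w => Dm.@[w] = 0); split.
  by exists (fun q => q = Dm) => x; split => [h q ->|h] //; apply: h.
by move=> x; rewrite hD; split=> [[? /eqP ?]|[? /eqP ?]].
Qed.

Theorem main_gen : birational (Vset (C := C) m n) (Uset (C := C) m n).
Proof.
exists (fun x => Vset m n x /\ Dz (x c2) != 0), (fun x => Uset m n x /\ Dz (x c2) != 0), fmap, gmap.
split; first exact: open_lem.
split; first by apply: dense_gen => p Vp Dp d d0; exact: approxV.
split; first exact: open_lem.
split; first by apply: dense_gen => p Up Dp d d0; exact: approxU.
split.
  move=> w _; exists (mk3 ('X_c0 * Smp m - 'X_c1 * Smp (m - 1)) ('X_c1 * Smp m - 'X_c0 * Smp (m - 1)) 'X_c2), 1.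
  split; first by rewrite rmorph1 oner_neq0.
  move=> w' _ _; apply: ord3_cases;
  by rewrite /mk3 /= rmorph1 divr1 ?rmorphB ?rmorphM /= ?mevalXU ?mev_cheb.
split.
  move=> w [_ Dw]; exists (mk3 ('X_c0 * Smp m + 'X_c1 * Smp (m - 1)) ('X_c1 * Smp m + 'X_c0 * Smp (m - 1)) ('X_c2 * Dz 'X_c2)), (Dz 'X_c2).
  split; first by rewrite Dz_morph /= mevalXU.
  move=> w' _ hw'; rewrite Dz_morph /= mevalXU in hw' *.
  apply: ord3_cases; rewrite /gmap /mk3 /= ?rmorphD ?rmorphM /= ?mevalXU ?mev_cheb //.
  by rewrite Dz_morph /= mevalXU mulfK.
split.
  move=> x [Vx Dx]; split=> //.
split.
  move=> y [Uy Dy]; split=> //.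
  have : Vf (gmap y c0) (gmap y c1) (gmap y c2) = 0; last by [].
  move: Dy; rewrite /Vf /Tf /gmap /mk3 /= /Dz => Dy.
  by rewrite inv2 // inv2 //.
split.
  move=> x [Vx Dx]; apply: pt_ext; rewrite /gmap /fmap /mk3 /= //; move: Dx; rewrite /Dz => Dx.
  by rewrite inv1.
  by rewrite inv1.
move=> y [Uy Dy]; apply: pt_ext; rewrite /gmap /fmap /mk3 /= //; move: Dy; rewrite /Dz => Dy.
  by rewrite inv2.
  by rewrite inv2.
Qed.

End Field.
End Main.


Theorem proposition4p4 (R : realType) (k l m n : int)
  (hk : k = 2 * m + 1) (hl : l = 2 * n + 1) :
  birational (Vset (C := R[i]) m n) (Uset (C := R[i]) m n).
Proof. exact: (@main_gen m n R[i]). Qed.
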